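(* Let $E,A\in\mathbb{R}^{n\times n}$ with $A$ nonsingular, and let $C$ be any matrix with $n$ columns such that for all $x\in\mathbb{R}^n$, $x\in\mathcal{C}(E,A)$ if and only if $Cx=0$. A symmetric matrix $P$ is a Lyapunov matrix for $(E,A)$ if and only if there exist scalars $\kappa_1,\kappa_2\ge 0$ such that $$P+\kappa_1C^TC>0,\qquad PA^{-1}E+E^TA^{-T}P-\kappa_2C^TC<0.$$
   Context: For $E,A\in\mathbb{R}^{n\times n}$ with $A$ nonsingular, $(E,A)$ denotes the linear descriptor system $E\dot x=Ax$. Its index is the smallest integer $k^*\ge 0$ with $\mathrm{Im}((A^{-1}E)^{k^*+1})=\mathrm{Im}((A^{-1}E)^{k^*})$, and its consistency space is $\mathcal{C}(E,A)=\mathrm{Im}((A^{-1}E)^{k^*})$. If $\mathcal{C}\neq\{0\}$, $A^{-1}E$ maps $\mathcal{C}$ bijectively onto itself; with $\tilde A$ the inverse of its restriction to $\mathcal{C}$, the system on $\mathcal{C}$ is equivalent to $\dot x=\tilde A x$. A symmetric matrix $P$ is a Lyapunov matrix for $(E,A)$ if $V(x)=x^TPx$ is positive on $\mathcal{C}\setminus\{0\}$ and its derivative along solutions, $\dot V=2x^TP\tilde A x$, is negative at every nonzero $x\in\mathcal{C}$. Inequalities $M>0$ ($M<0$) for symmetric $M$ mean positive (negative) definite. *)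

(* Defs.v *)
(* Real numbers are modelled by an arbitrary real closed
   field R (the statement is purely algebraic). *)
From HB Require Import structures.
From mathcomp Require Import all_boot all_order all_algebra.
Set Implicit Arguments. Unset Strict Implicit. Unset Printing Implicit Defensive.
Import Order.TTheory GRing.Theory Num.Theory.
Local Open Scope ring_scope.

Section Defs.
Variable R : rcfType.

Definition in_image (n : nat) (N : 'M[R]_n) (x : 'cV[R]_n) : Prop :=
  exists y : 'cV[R]_n, x = N *m y.

Definition AinvE (n : nat) (E A : 'M[R]_n) : 'M[R]_n := invmx A *m E.

Definition is_index (n : nat) (E A : 'M[R]_n) (k : nat) : Prop :=
  (forall x, in_image (AinvE E A ^+ k.+1) x <-> in_image (AinvE E A ^+ k) x) /\
  (forall j, (j < k)%N ->
     ~ (forall x, in_image (AinvE E A ^+ j.+1) x <-> in_image (AinvE E A ^+ j) x)).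

(* consistency space C(E,A) = Im((A^{-1}E)^{k*}) with k* the index *)
Definition in_consistency (n : nat) (E A : 'M[R]_n) (x : 'cV[R]_n) : Prop :=
  exists k, is_index E A k /\ in_image (AinvE E A ^+ k) x.

Definition qform (n : nat) (P : 'M[R]_n) (x y : 'cV[R]_n) : R :=
  (x^T *m P *m y) 0 0.

Definition posdef (n : nat) (M : 'M[R]_n) : Prop :=
  forall x : 'cV[R]_n, x != 0 -> 0 < qform M x x.

Definition negdef (n : nat) (M : 'M[R]_n) : Prop :=
  forall x : 'cV[R]_n, x != 0 -> qform M x x < 0.

(* P is a Lyapunov matrix for (E,A): P symmetric, V(x) = x^T P x positive on
   C \ {0}, and dV = 2 x^T P (Atilde x) < 0 for nonzero x in C, where
   Atilde x is the (unique) y in C with (A^{-1}E) y = x. *)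
Definition lyapunov (n : nat) (E A P : 'M[R]_n) : Prop :=
  P^T = P /\
  (forall x, in_consistency E A x -> x != 0 -> 0 < qform P x x) /\
  (forall x y, in_consistency E A x -> x != 0 ->
     in_consistency E A y -> AinvE E A *m y = x ->
     2%:R * qform P x y < 0).
End Defs.

(* Main.v *)
Require Import Defs.
From HB Require Import structures.
From mathcomp Require Import all_boot all_order all_algebra.
From mathcomp Require Import ring lra.
Set Implicit Arguments. Unset Strict Implicit. Unset Printing Implicit Defensive.
Import Order.TTheory GRing.Theory Num.Theory.
Local Open Scope ring_scope.

Section Aux.
Variable R : rcfType.

Definition bf n (G : 'M[R]_n) (a b : 'rV[R]_n) : R := (a *m G *m b^T) 0 0.
Definition n2 n (y : 'rV[R]_n) : R := (y *m y^T) 0 0.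

Lemma n2E n (y : 'rV[R]_n) : n2 y = \sum_i y 0 i ^+ 2.
Proof. rewrite /n2 mxE; apply: eq_bigr => j _; by rewrite mxE expr2. Qed.

Lemma n2_ge0 n (y : 'rV[R]_n) : 0 <= n2 y.
Proof. rewrite n2E; apply: sumr_ge0 => i _; exact: sqr_ge0. Qed.

Lemma n2_eq0 n (y : 'rV[R]_n) : n2 y = 0 -> y = 0.
Proof.
rewrite n2E => h; apply/rowP => i; rewrite mxE.
have := @psumr_eq0P _ _ xpredT (fun i => y 0 i ^+ 2) (fun i _ => sqr_ge0 (y 0 i)) h i isT.
by move/eqP; rewrite sqrf_eq0 => /eqP.
Qed.

Lemma n2_gt0 n (y : 'rV[R]_n) : y != 0 -> 0 < n2 y.
Proof.
move=> hy; rewrite lt_neqAle n2_ge0 andbT eq_sym; apply/eqP => /n2_eq0 h.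
by rewrite h eqxx in hy.
Qed.

Lemma bf_tr n (G : 'M[R]_n) a b : bf G a b = bf G^T b a.
Proof.
rewrite /bf -[in LHS](trmxK (a *m G *m b^T)) [in LHS]mxE.
by rewrite !trmx_mul trmxK mulmxA.
Qed.

Lemma bf_sym n (G : 'M[R]_n) a b : G^T = G -> bf G a b = bf G b a.
Proof. by move=> hG; rewrite bf_tr hG. Qed.

Lemma bfDl n (G : 'M[R]_n) a b c : bf G (a + b) c = bf G a c + bf G b c.
Proof. by rewrite /bf !mulmxDl mxE. Qed.
Lemma bfDr n (G : 'M[R]_n) a b c : bf G a (b + c) = bf G a b + bf G a c.
Proof. by rewrite /bf linearD /= !mulmxDr mxE. Qed.
Lemma bfZl n (G : 'M[R]_n) s a c : bf G (s *: a) c = s * bf G a c.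
Proof. by rewrite /bf -!scalemxAl mxE. Qed.
Lemma bfZr n (G : 'M[R]_n) s a c : bf G a (s *: c) = s * bf G a c.
Proof. by rewrite /bf linearZ /= -!scalemxAr mxE. Qed.
Lemma bfDm n (G H : 'M[R]_n) a c : bf (G + H) a c = bf G a c + bf H a c.
Proof. by rewrite /bf mulmxDr mulmxDl mxE. Qed.
Lemma bfZm n (G : 'M[R]_n) s a c : bf (s *: G) a c = s * bf G a c.
Proof. by rewrite /bf -scalemxAr -scalemxAl mxE. Qed.
Lemma bfNm n (G : 'M[R]_n) a c : bf (- G) a c = - bf G a c.
Proof. by rewrite /bf mulmxN mulNmx mxE. Qed.

Lemma n2_bf n (y : 'rV[R]_n) : n2 y = bf 1%:M y y.
Proof. by rewrite /bf /n2 mulmx1. Qed.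


Lemma bf_exp n (G : 'M[R]_n) a b s : G^T = G ->
  bf G (a + s *: b) (a + s *: b) = bf G a a + 2 * s * bf G a b + s ^+ 2 * bf G b b.
Proof.
move=> hG; rewrite !(bfDl, bfDr, bfZl, bfZr) (bf_sym b a hG); ring.
Qed.

Lemma CS n (G : 'M[R]_n) a b : G^T = G -> (forall y, 0 <= bf G y y) ->
  bf G a b ^+ 2 <= bf G a a * bf G b b.
Proof.
move=> hG hp.
have key : forall s, 0 <= bf G a a + 2 * s * bf G a b + s ^+ 2 * bf G b b.
  by move=> s; rewrite -bf_exp.
move: key; set A := bf G a a; set B := bf G a b; set C := bf G b b => key.
have C0 : 0 <= C by exact: hp.
have [Cp|Cz] := boolP (0 < C).
  have := key (- B / C).
  have -> : A + 2 * (- B / C) * B + (- B / C) ^+ 2 * C = (A * C - B ^+ 2) / C.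
    by field; rewrite gt_eqF.
  rewrite ler_pdivlMr // mul0r => h; lra.
have C00 : C = 0 by apply/eqP; rewrite eq_le C0 andbT leNgt.
have [B0|Bn] := eqVneq B 0.
  by rewrite B0 C00 expr0n /= mulr0.
have := key (- (A + 1) / (2 * B)).
have -> : A + 2 * (- (A + 1) / (2 * B)) * B + (- (A + 1) / (2 * B)) ^+ 2 * C = -1.
  rewrite C00; field; by rewrite ?mulf_neq0 ?pnatr_eq0 //=.
move=> h; lra.
Qed.

Lemma sq_le_n2 n (y : 'rV[R]_n) i : y 0 i ^+ 2 <= n2 y.
Proof.
rewrite n2E (bigD1 i) //= lerDl; apply: sumr_ge0 => j _; exact: sqr_ge0.
Qed.

Lemma upper n (H : 'M[R]_n) : exists2 b, 0 <= b & forall y, bf H y y <= b * n2 y.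
Proof.
exists (\sum_j \sum_i `|H i j|).
  by apply: sumr_ge0 => j _; apply: sumr_ge0 => i _.
move=> y; rewrite /bf mxE mulr_suml; apply: ler_sum => j _.
rewrite ?mxE mulr_suml mulr_suml; apply: ler_sum => i _.
rewrite ?mxE.
have hi := sq_le_n2 y i; have hj := sq_le_n2 y j.
have e1 : y 0 i ^+ 2 = `|y 0 i| ^+ 2 by rewrite real_normK // num_real.
have e2 : y 0 j ^+ 2 = `|y 0 j| ^+ 2 by rewrite real_normK // num_real.
have h1 : y 0 i * H i j * y 0 j <= `|H i j| * (`|y 0 i| * `|y 0 j|).
  have -> : y 0 i * H i j * y 0 j = H i j * (y 0 i * y 0 j) by ring.
  by apply: le_trans (ler_norm _) _; rewrite !normrM.
have h2 : `|y 0 i| * `|y 0 j| <= n2 y.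
  rewrite e1 in hi; rewrite e2 in hj.
  have := normr_ge0 (y 0 i); have := normr_ge0 (y 0 j); nra.
apply: le_trans h1 _; apply: ler_wpM2l => //.
Qed.


Lemma bf0 n (G : 'M[R]_n) : bf G 0 0 = 0.
Proof. by rewrite /bf !mul0mx mxE. Qed.

Lemma bf0l n (G : 'M[R]_n) b : bf G 0 b = 0.
Proof. by rewrite /bf !mul0mx mxE. Qed.
Lemma bf0r n (G : 'M[R]_n) a : bf G a 0 = 0.
Proof. by rewrite /bf trmx0 !mulmx0 mxE. Qed.

Lemma posdef_psd n (G : 'M[R]_n) : (forall z, z != 0 -> 0 < bf G z z) ->
  forall z, 0 <= bf G z z.
Proof.
move=> h z; have [->|nz] := eqVneq z 0; first by rewrite bf0.
exact/ltW/h.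
Qed.

Lemma posdef_unit n (G : 'M[R]_n) : (forall z, z != 0 -> 0 < bf G z z) ->
  G \in unitmx.
Proof.
move=> h; rewrite -row_free_unit -kermx_eq0; apply/eqP/row_matrixP => i.
rewrite row0; apply/eqP/negP => /negP nz.
have := h _ nz; rewrite /bf -row_mul mulmx_ker row0 mul0mx mxE.
by rewrite ltxx.
Qed.

Lemma unif_full r (G : 'M[R]_r) : G^T = G ->
  (forall z, z != 0 -> 0 < bf G z z) ->
  exists2 c, 0 < c & forall z, c * n2 z <= bf G z z.
Proof.
move=> hG hp; have hpsd := posdef_psd hp; have hU := posdef_unit hp.
pose w (i : 'I_r) : 'rV[R]_r := delta_mx 0 i *m (invmx G)^T.
have hw : forall z i, bf G z (w i) = z 0 i.
  move=> z i; rewrite /bf /w trmx_mul trmxK trmx_delta.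
  by rewrite mulmxA -(mulmxA z) mulmxV // mulmx1 -colE mxE.
pose b := \sum_i bf G (w i) (w i).
have b0 : 0 <= b by apply: sumr_ge0 => i _.
exists (b + 1)^-1; first by rewrite invr_gt0; lra.
move=> z; rewrite mulrC -ler_pdivlMr ?invr_gt0; last by lra.
rewrite invrK.
have : n2 z <= bf G z z * b.
  rewrite n2E /b mulr_sumr; apply: ler_sum => i _.
  by rewrite -hw; apply: CS.
have := hpsd z; nra.
Qed.


Lemma bf_mul p n (G : 'M[R]_n) (B : 'M[R]_(p, n)) z :
  bf (B *m G *m B^T) z z = bf G (z *m B) (z *m B).
Proof. by rewrite /bf trmx_mul !mulmxA. Qed.

Lemma unif_sub p n (B : 'M[R]_(p, n)) (G : 'M[R]_n) : G^T = G ->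
  (forall y, (y <= B)%MS -> y != 0 -> 0 < bf G y y) ->
  exists2 c, 0 < c & forall y, (y <= B)%MS -> c * n2 y <= bf G y y.
Proof.
move=> hG hp; set B' := row_base B.
have sB : forall y : 'rV[R]_n, (y <= B')%MS = (y <= B)%MS.
  by move=> y; exact: ((eq_row_base B).2 _ y).2.
have hfr : row_free B' by exact: row_base_free.
clearbody B'.
pose G' := B' *m G *m B'^T.
have hG' : G'^T = G' by rewrite /G' !trmx_mul trmxK hG mulmxA.
have hp' : forall z, z != 0 -> 0 < bf G' z z.
  move=> z nz; rewrite /G' bf_mul; apply: hp.
    by rewrite -sB submxMl.
  by rewrite mulmx_free_eq0.
have [c' c'p hc'] := unif_full hG' hp'.
have [g g0 hg] := upper (B' *m 1%:M *m B'^T).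
exists (c' / (g + 1)); first by rewrite divr_gt0 //; lra.
move=> y; rewrite -sB => /submxP [D ->].
have h1 := hc' D; rewrite /G' bf_mul in h1.
have h2 := hg D; rewrite bf_mul -n2_bf in h2.
have h3 := n2_ge0 D; have h4 := n2_ge0 (D *m B').
rewrite mulrAC ler_pdivrMr; last by lra.
nra.
Qed.


Lemma finsler n m (S : 'M[R]_n) (D : 'M[R]_(n, m)) : S^T = S ->
  (forall y, y *m D = 0 -> y != 0 -> 0 < bf S y y) ->
  exists2 k, 0 <= k & forall y, y != 0 -> 0 < bf (S + k *: (D *m D^T)) y y.
Proof.
move=> hS hp.
set K := kermx D; set W := (K^C)%MS.
have [c1 c1p hc1] : exists2 c, 0 < c & forall y, (y <= K)%MS -> c * n2 y <= bf S y y.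
  apply: unif_sub => // y; rewrite sub_kermx => /eqP; exact: hp.
have hDD : (D *m D^T)^T = D *m D^T by rewrite trmx_mul trmxK.
have bfDD : forall a b : 'rV[R]_n, bf (D *m D^T) a b = bf 1%:M (a *m D) (b *m D).
  by move=> a b; rewrite /bf mulmx1 trmx_mul !mulmxA.
have [c2 c2p hc2] : exists2 c, 0 < c & forall y, (y <= W)%MS -> c * n2 y <= bf (D *m D^T) y y.
  apply: unif_sub => // y yW ny; rewrite bfDD -n2_bf; apply: n2_gt0.
  apply/eqP => yD; move/eqP: ny; apply.
  apply/eqP; rewrite -submx0 -(capmx_compl K) sub_capmx yW andbT.
  by rewrite sub_kermx yD.
have [a a0 ha] := upper (- S).
have [b b0 hb] := upper (S *m S).
pose ic := 2 / c1.
have icp : 0 < ic by rewrite divr_gt0.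
exists ((ic * b + a + 1) / c2).
  by apply: divr_ge0; [have := mulr_ge0 (ltW icp) b0; lra | exact: ltW].
move=> y ny.
have : (y <= K + W)%MS by apply: submx_full; exact: addsmx_compl_full.
case/sub_addsmxP => [[u1 u2]] /= ey.
set u := u1 *m K in ey; set w := u2 *m W in ey.
have uK : (u <= K)%MS by apply: submxMl.
have wW : (w <= W)%MS by apply: submxMl.
have uD : u *m D = 0 by apply/eqP; rewrite -sub_kermx.
clearbody u w.
rewrite ey bfDm bfZm.
have eS := bf_exp u w 1 hS; rewrite scale1r in eS; rewrite eS.
have eD := bf_exp u w 1 hDD; rewrite scale1r in eD; rewrite eD.
rewrite !bfDD uD !bf0l mulr0 !add0r -bfDD !mulr1 expr1n !mul1r.
set X := n2 u; set Y := n2 w; set p := bf S u w.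
set Q := bf (D *m D^T) w w.
pose v := w *m S.
have ep : p = bf 1%:M u v by rewrite /p /bf /v mulmx1 trmx_mul hS mulmxA.
have ht := n2_ge0 (u + (2 / c1) *: v).
rewrite n2_bf bf_exp ?trmx1 // -!n2_bf -ep in ht.
have hZ : n2 v <= b * Y by rewrite /v n2_bf -bf_mul mulmx1 hS.
have hp2 : 0 <= c1 / 2 * X + 2 * p + ic * n2 v.
  have e : c1 / 2 * X + 2 * p + ic * n2 v =
     c1 / 2 * (X + 2 * (2 / c1) * p + (2 / c1) ^+ 2 * n2 v).
    by rewrite /ic; field; rewrite gt_eqF.
  rewrite e; apply: mulr_ge0; first by apply: divr_ge0; [exact: ltW|].
  exact: ht.
have hX := hc1 u uK; have hY := hc2 w wW.
have ha' := ha w; rewrite bfNm in ha'.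
have f1 : ic * n2 v <= ic * b * Y by rewrite -mulrA; apply: ler_wpM2l => //; exact: ltW.
set k := (ic * b + a + 1) / c2.
have f2 : (ic * b + a + 1) * Y <= k * Q.
  have ek : k * (c2 * Y) = (ic * b + a + 1) * Y.
    by rewrite /k; field; rewrite gt_eqF.
  rewrite -ek; apply: ler_wpM2l => //.
  apply: divr_ge0; last exact: ltW.
  by have := mulr_ge0 (ltW icp) b0; lra.
have X0 := n2_ge0 u; have Y0 := n2_ge0 w.
have pos : 0 < c1 / 2 * X + Y.
  have [X00|Xn] := eqVneq X 0.
    have [Y00|Yn] := eqVneq Y 0.
      move: ny; rewrite ey (n2_eq0 X00) (n2_eq0 Y00) addr0 eqxx //.
    rewrite X00 mulr0 add0r lt_neqAle eq_sym Yn Y0 //.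
  apply: ltr_pwDl => //; apply: mulr_gt0; first by rewrite divr_gt0.
  by rewrite lt_neqAle eq_sym Xn X0.
move: hX ha' X0 Y0; rewrite -/X -/Y => hX ha' X0 Y0.
have : c1 / 2 * X = c1 * X - c1 / 2 * X by field.
lra.
Qed.


Lemma im_ker n (M N : 'M[R]_n) : M *m N = N *m M ->
  (forall x, in_image (M *m N) x <-> in_image N x) ->
  forall z : 'cV[R]_n, M *m N *m z = 0 -> N *m z = 0.
Proof.
move=> hc h z hz.
have s1 : (N^T <= (M *m N)^T)%MS.
  apply/row_subP => i; rewrite -tr_col.
  have [y ey] := (h (col i N)).2 (ex_intro _ (delta_mx i 0) (colE i N)).
  by rewrite ey trmx_mul submxMl.
have s1' : ((M *m N)^T <= N^T)%MS by rewrite hc trmx_mul submxMl.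
have s2 : (kermx N^T <= kermx (M *m N)^T)%MS.
  by rewrite sub_kermx trmx_mul mulmxA mulmx_ker mul0mx.
have rk : \rank (kermx N^T) = \rank (kermx (M *m N)^T).
  rewrite !mxrank_ker; congr (_ - _)%N; apply/eqP; rewrite eqn_leq.
  by rewrite !mxrankS.
have s3 : (kermx (M *m N)^T <= kermx N^T)%MS.
  by rewrite -(mxrank_leqif_sup s2).2 rk.
have : (z^T <= kermx (M *m N)^T)%MS by rewrite sub_kermx -trmx_mul hz trmx0.
move/(submx_trans)/(_ s3); rewrite sub_kermx -trmx_mul => /eqP.
by move/(congr1 trmx); rewrite trmxK trmx0.
Qed.

End Aux.

Unset Implicit Arguments.

Section Main.
Variable R : rcfType.

Lemma qbf n (G : 'M[R]_n) (x z : 'cV[R]_n) : qform G x z = bf G x^T z^T.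
Proof. by rewrite /qform /bf trmxK. Qed.

Lemma tr_neq0 n (x : 'cV[R]_n) : (x^T != 0) = (x != 0).
Proof.
apply/idP/idP => /eqP h; apply/eqP => e; apply: h; first by rewrite e trmx0.
by rewrite -(trmxK x) e trmx0.
Qed.

Lemma Cx0 m n (C : 'M[R]_(m, n)) (x : 'cV[R]_n) : (C *m x = 0) <-> (x^T *m C^T = 0).
Proof.
split => h; first by rewrite -trmx_mul h trmx0.
by rewrite -(trmxK (C *m x)) trmx_mul h trmx0.
Qed.

Lemma posdef_bf n (G : 'M[R]_n) : posdef G <-> (forall y, y != 0 -> 0 < bf G y y).
Proof.
split => h.
  move=> y ny; rewrite -(trmxK y) -qbf; apply: h; by rewrite -tr_neq0 trmxK.
by move=> x nx; rewrite qbf; apply: h; rewrite tr_neq0.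
Qed.

Lemma negdef_bf n (G : 'M[R]_n) : negdef G <-> (forall y, y != 0 -> 0 < bf (- G) y y).
Proof.
split => h.
  move=> y ny; rewrite bfNm oppr_gt0 -(trmxK y) -qbf; apply: h; by rewrite -tr_neq0 trmxK.
by move=> x nx; rewrite qbf -oppr_gt0 -bfNm; apply: h; rewrite tr_neq0.
Qed.

Lemma qDm n (G H : 'M[R]_n) x : qform (G + H) x x = qform G x x + qform H x x.
Proof. by rewrite !qbf bfDm. Qed.
Lemma qZm n (G : 'M[R]_n) s x : qform (s *: G) x x = s * qform G x x.
Proof. by rewrite !qbf bfZm. Qed.
Lemma qNm n (G : 'M[R]_n) x : qform (- G) x x = - qform G x x.
Proof. by rewrite !qbf bfNm. Qed.

End Main.

Theorem lemma2 (R : rcfType) (n m : nat) (E A : 'M[R]_n) (C : 'M[R]_(m, n))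
    (hA : A \in unitmx)
    (hC : forall x : 'cV[R]_n, in_consistency E A x <-> C *m x = 0)
    (P : 'M[R]_n) (hP : P^T = P) :
  lyapunov E A P <->
  exists k1 k2 : R, 0 <= k1 /\ 0 <= k2 /\
    posdef (P + k1 *: (C^T *m C)) /\
    negdef (P *m invmx A *m E + E^T *m (invmx A)^T *m P - k2 *: (C^T *m C)).
Proof.
set M := invmx A *m E.
have eQ : P *m invmx A *m E + E^T *m (invmx A)^T *m P = P *m M + M^T *m P.
  by rewrite /M -mulmxA trmx_mul.
rewrite eQ.
have hMd : AinvE E A = M by [].
clearbody M.
set Q := P *m M + M^T *m P.
have hQ : Q^T = Q by rewrite /Q linearD /= !trmx_mul trmxK hP addrC.
have keyQ : forall y : 'cV[R]_n, qform Q y y = 2 * qform P (M *m y) y.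
  move=> y; rewrite !qbf /Q bfDm trmx_mul.
  have -> : bf (M^T *m P) y^T y^T = bf P (y^T *m M^T) y^T by rewrite /bf mulmxA.
  rewrite bf_tr trmx_mul hP.
  have -> : bf (M^T *m P) y^T y^T = bf P (y^T *m M^T) y^T by rewrite /bf mulmxA.
  by rewrite mulr2n mulrDl mul1r.
have CC : forall x : 'cV[R]_n, C *m x = 0 -> forall G, qform (G + 0) x x = qform G x x.
  by move=> x _ G; rewrite addr0.
have qCC : forall x : 'cV[R]_n, C *m x = 0 -> qform (C^T *m C) x x = 0.
  by move=> x hx; rewrite /qform -!mulmxA hx !mulmx0 mxE.
have DD : C^T *m C^T^T = C^T *m C by rewrite trmxK.
have F2 : forall y : 'cV[R]_n, C *m y = 0 -> y != 0 -> C *m (M *m y) = 0 /\ M *m y != 0.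
  move=> y hy ny; have [k [[hk1 hk2] [z ez]]] := (hC y).2 hy.
  have eS : AinvE E A ^+ k.+1 = M *m AinvE E A ^+ k by rewrite hMd exprS mulmxE.
  have eSr : M *m AinvE E A ^+ k = AinvE E A ^+ k *m M.
    by rewrite -eS hMd exprSr mulmxE.
  split.
    apply/(hC _).1; exists k; split; first by [].
    apply/(hk1 _).1; exists z; by rewrite eS ez mulmxA.
  apply/eqP => hM; move/eqP: ny; apply.
  rewrite ez; apply: (im_ker eSr) => [x|]; first by rewrite -eS; exact: hk1.
  by rewrite -mulmxA -ez.
split.
- move=> [_ [hV hD]].
  have [k1 k10 hk1] : exists2 k, 0 <= k & forall y, y != 0 -> 0 < bf (P + k *: (C^T *m C^T^T)) y y.
    apply: finsler => // y hy ny.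
    rewrite -(trmxK y) -qbf; apply: hV; first by apply/hC/Cx0; rewrite trmxK.
    by rewrite -tr_neq0 trmxK.
  have [k2 k20 hk2] : exists2 k, 0 <= k & forall y, y != 0 -> 0 < bf (- Q + k *: (C^T *m C^T^T)) y y.
    apply: finsler; first by rewrite linearN /= hQ.
    move=> y hy ny.
    have hx : C *m y^T = 0 by apply/Cx0; rewrite trmxK.
    have nx : y^T != 0 by rewrite -tr_neq0 trmxK.
    have [h1 h2] := F2 _ hx nx.
    rewrite bfNm oppr_gt0 -(trmxK y) -qbf keyQ.
    have e : AinvE E A *m y^T = M *m y^T by rewrite hMd.
    exact: (hD _ _ ((hC _).2 h1) h2 ((hC _).2 hx) e).
  exists k1, k2; split => //; split => //; split.
    by apply/posdef_bf; rewrite -DD.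
  apply/negdef_bf => y ny; move: (hk2 y ny); rewrite DD.
  by rewrite opprB addrC.
- move=> [k1 [k2 [k10 [k20 [hp hn]]]]].
  split => //; split.
    move=> x /hC hx nx; have := hp x nx; rewrite qDm qZm qCC //.
    by rewrite mulr0 addr0.
  move=> x y /hC hx nx /hC hy eMy.
  have ny : y != 0 by apply: contraNneq nx => y0; rewrite -eMy y0 mulmx0.
  have := hn y ny; rewrite qDm qNm qZm qCC // mulr0 subr0.
  by rewrite keyQ -hMd eMy.
Qed.
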